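(* For every positive integer $p$, the number $m(2,p)$ of vertices of $H_\infty(2,p)$ satisfies $m(2,p)=8\sum_{j=1}^p\phi(j)$, where $\phi$ is the Euler totient function (with $\phi(1)=1$).
   Context: For $v\in\mathbb{Z}^2$, $\gcd(v)$ is the largest integer dividing both entries of $v$, and $v\succ0$ means the first nonzero coordinate of $v$ is positive. $H_\infty(2,p)=\sum[0,1]\{v\in\mathbb{Z}^2: \|v\|_\infty\leq p,\ \gcd(v)=1,\ v\succ0\}$, the Minkowski sum of the segments $[0,v]$ over these vectors $v$. $\phi(j)$ counts positive integers less than or equal to $j$ that are relatively prime to $j$. *)

(* Defs.v *)
From mathcomp Require Import all_boot all_order all_algebra.
Set Implicit Arguments. Unset Strict Implicit. Unset Printing Implicit Defensive.
Import Order.TTheory GRing.Theory Num.Theory.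
Local Open Scope ring_scope.

Definition zrange (p : nat) : seq int :=
  [seq (i%:Z - p%:Z) | i <- iota 0 (2 * p).+1].

Definition lexpos (v : int * int) : bool :=
  (0 < v.1) || ((v.1 == 0) && (0 < v.2)).

Definition gens (p : nat) : seq (int * int) :=
  [seq v <- [seq (a, b) | a <- zrange p, b <- zrange p]
     | (gcdz v.1 v.2 == 1) && lexpos v].

Definition inH (R : realFieldType) (p : nat) (x : R * R) : Prop :=
  exists t : nat -> R,
    (forall i, (i < size (gens p))%N -> 0 <= t i <= 1) /\
    x.1 = \sum_(i < size (gens p)) t i * ((nth (0,0) (gens p) i).1)%:~R /\
    x.2 = \sum_(i < size (gens p)) t i * ((nth (0,0) (gens p) i).2)%:~R.

Definition is_vertex (R : realFieldType) (p : nat) (x : R * R) : Prop :=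
  inH p x /\
  forall (y z : R * R) (lam : R), inH p y -> inH p z -> 0 < lam < 1 ->
    x.1 = lam * y.1 + (1 - lam) * z.1 ->
    x.2 = lam * y.2 + (1 - lam) * z.2 -> y = z.

(* Main.v *)
Require Import Defs.
From mathcomp Require Import all_boot all_order all_algebra zify ring lra.
Set Implicit Arguments. Unset Strict Implicit. Unset Printing Implicit Defensive.
Import Order.TTheory GRing.Theory Num.Theory.

Section IntPart.
Local Open Scope ring_scope.

Definition dot (c v : int * int) : int := c.1 * v.1 + c.2 * v.2.
Definition rot (c : int * int) : int * int := (- c.2, c.1).
Definition cross (a b : int * int) : int := a.1 * b.2 - a.2 * b.1.
Definition posv (c v : int * int) : bool :=
  (0 < dot c v) || ((dot c v == 0) && (0 < dot (rot c) v)).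
Definition negv (v : int * int) : int * int := (- v.1, - v.2).
Definition prim (p : nat) (v : int * int) : bool :=
  [&& gcdz v.1 v.2 == 1%N, `|v.1| <= p%:Z & `|v.2| <= p%:Z].
Definition Dp (p : nat) := gens p ++ map negv (gens p).

Lemma mem_zrange p x : (x \in zrange p) = (`|x| <= p%:Z).
Proof.
apply/mapP/idP.
  case=> i; rewrite mem_iota add0n => /andP[_ hi] ->; (timeout 20 lia).
move=> h; exists (absz (x + p%:Z)); first by rewrite mem_iota; (timeout 20 lia).
(timeout 20 lia).
Qed.

Lemma mem_gens p v : (v \in gens p) = prim p v && lexpos v.
Proof.
rewrite mem_filter /prim; case: v => a b /=.
have -> : ((a, b) \in [seq (a0, b0) | a0 <- zrange p, b0 <- zrange p])
   = (`|a| <= p%:Z) && (`|b| <= p%:Z).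
  apply/allpairsP/andP.
    by case=> [[a' b']] /= [h1 h2 [-> ->]]; rewrite -!mem_zrange.
  by case=> h1 h2; exists (a, b); rewrite /= !mem_zrange.
by case: (gcdz a b == 1%N); case: (lexpos (a,b)); case: (`|a| <= p%:Z); case: (`|b| <= p%:Z).
Qed.

Lemma prim_neq0 p v : prim p v -> v != (0, 0).
Proof. case: v => a b; rewrite /prim /= => /and3P[h _ _]; apply/negP => /eqP[ha hb].
by move: h; rewrite ha hb gcdz0.
Qed.

Lemma prim_negv p v : prim p (negv v) = prim p v.
Proof. by case: v => a b; rewrite /prim /= gcdNz gcdzN !normrN. Qed.

Lemma mem_Dp p v : (v \in Dp p) = prim p v.
Proof.
rewrite mem_cat mem_gens.
have -> : (v \in map negv (gens p)) = (negv v \in gens p).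
  apply/mapP/idP.
    by case=> w hw ->; case: w hw => a b; rewrite /negv /= !opprK.
  by move=> h; exists (negv v) => //; case: v {h} => a b; rewrite /negv /= !opprK.
rewrite mem_gens prim_negv.
case hp: (prim p v) => //=.
have := prim_neq0 hp; case: v hp => a b _ /= h.
rewrite /lexpos /=; apply/orP; move: h; rewrite xpair_eqE negb_and.
case: (ltgtP a 0) => ha; case: (ltgtP b 0) => hb //=; (timeout 20 lia).
Qed.

Lemma dvd_absz (a b : int) : (a %| b)%Z -> (b %| a)%Z -> `|a|%N = `|b|%N.
Proof. rewrite /dvdz => h1 h2; by rewrite -(gcdn_idPl h1) (gcdn_idPr h2). Qed.

Lemma prim_eq p a b : prim p a -> prim p b -> cross a b = 0 -> 0 < dot a b -> a = b.
Proof.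
case: a => a1 a2; case: b => b1 b2; rewrite /prim /cross /dot /=.
move=> /and3P[ha _ _] /and3P[hb _ _] hc hd.
have hab : a1 * b2 = a2 * b1 by (timeout 20 lia).
have ca : coprimez a1 a2 by [].
have ca' : coprimez a2 a1 by rewrite /coprimez gcdzC.
have cb : coprimez b1 b2 by [].
have cb' : coprimez b2 b1 by rewrite /coprimez gcdzC.
have d1 : (a1 %| b1)%Z.
  by rewrite -(Gauss_dvdzr _ ca) -hab; apply: dvdz_mulr; apply: dvdzz.
have d1' : (b1 %| a1)%Z.
  by rewrite -(Gauss_dvdzr _ cb) mulrC hab; apply: dvdz_mull; apply: dvdzz.
have d2 : (a2 %| b2)%Z.
  by rewrite -(Gauss_dvdzr _ ca') hab; apply: dvdz_mulr; apply: dvdzz.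
have d2' : (b2 %| a2)%Z.
  by rewrite -(Gauss_dvdzr _ cb') mulrC -hab; apply: dvdz_mull; apply: dvdzz.
have e1 := dvd_absz d1 d1'; have e2 := dvd_absz d2 d2'.
have [-> ->] : a1 = b1 /\ a2 = b2 by clear -e1 e2 hab hd; (timeout 20 nia).
by [].
Qed.

Lemma gens_cross_eq p a b : a \in gens p -> b \in gens p -> cross a b = 0 -> a = b.
Proof.
rewrite !mem_gens => /andP[pa la] /andP[pb lb] hc.
apply: (prim_eq pa pb hc); move: la lb hc; case: a {pa} => a1 a2; case: b {pb} => b1 b2.
rewrite /lexpos /cross /dot /= => la lb hc; (timeout 20 nia).
Qed.

Definition fc (p : nat) (c : int * int) : int * int :=
  ((2 * p * p + 1)%:Z * c.1 + (rot c).1, (2 * p * p + 1)%:Z * c.2 + (rot c).2).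

Lemma dot_fc p c g : dot (fc p c) g = (2 * p * p + 1)%:Z * dot c g + dot (rot c) g.
Proof. rewrite /dot /fc /=; ring. Qed.

Lemma rot_bound p c g : prim p c -> prim p g -> `|dot (rot c) g| < (2 * p * p + 1)%:Z.
Proof.
case: c => c1 c2; case: g => g1 g2; rewrite /prim /dot /rot /= => /and3P[_ h1 h2] /and3P[_ h3 h4].
(timeout 20 nia).
Qed.

Lemma dot_rot_nz p c g : prim p c -> prim p g -> dot c g = 0 -> dot (rot c) g = 0 -> False.
Proof.
move=> /prim_neq0 + /prim_neq0; case: c => c1 c2; case: g => g1 g2.
rewrite /dot /rot /= !xpair_eqE !negb_and => h1 h2 e1 e2.
have : (c1*g1+c2*g2)^+2 + (- c2 * g1 + c1 * g2)^+2 = (c1^+2+c2^+2)*(g1^+2+g2^+2) by ring.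
rewrite e1 e2. (timeout 20 nia).
Qed.

Lemma posE p c g : prim p c -> prim p g -> posv c g = (0 < dot (fc p c) g).
Proof.
move=> hc hg; have hb := rot_bound hc hg; rewrite dot_fc /posv.
set d := dot c g; set e := dot (rot c) g; move: hb; rewrite -/e => hb.
clear hc hg; apply/idP/idP; (timeout 20 nia).
Qed.

Lemma fc_nz p c g : prim p c -> prim p g -> dot (fc p c) g != 0.
Proof.
move=> hc hg; have hb := rot_bound hc hg; have hn := dot_rot_nz hc hg; rewrite dot_fc.
move: hb hn; set d := dot c g; set e := dot (rot c) g => hb hn.
apply/eqP => h; clear hc hg.
have hd : d = 0 by (timeout 20 nia).
by apply: hn => //; rewrite hd mulr0 add0r in h.
Qed.

Lemma posv_rot p c : prim p c -> posv c (rot c).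
Proof.
move/prim_neq0; case: c => c1 c2; rewrite /posv /dot /rot /= xpair_eqE negb_and => h.
apply/orP; right; apply/andP; split; [apply/eqP; ring | nia].
Qed.

Lemma posv_neg p c g : prim p c -> prim p g -> posv c (negv g) = ~~ posv c g.
Proof.
move=> hc hg; have hn := dot_rot_nz hc hg; move: hn.
case: c {hc} => c1 c2; case: g {hg} => g1 g2; rewrite /posv /dot /rot /negv /= => hn.
apply/idP/idP.
- move=> h; apply/negP => h'; (timeout 20 nia).
- move=> h. apply/orP. move/negP: h => h.
  case: (ltgtP 0 (c1 * g1 + c2 * g2)) => h1.
  + by exfalso; apply: h; rewrite h1.
  + left; (timeout 20 nia).
  + right; apply/andP; split; first (apply/eqP; nia).
    case: (ltgtP 0 (- c2 * g1 + c1 * g2)) => h2.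
    * by exfalso; apply: h; rewrite -h1 eqxx h2 orbT.
    * (timeout 20 nia).
    * exfalso; apply: hn; (timeout 20 lia).
Qed.

Lemma pattern_diff_int p c c' : prim p c -> prim p c' -> c != c' ->
  ~~ posv c' (rot c) || ~~ posv c (rot c').
Proof.
move=> hc hc' hne; rewrite -negb_and; apply/negP => /andP[h1 h2].
move/eqP: hne; apply; apply: (prim_eq hc hc').
- move: h1 h2; case: c {hc} => c1 c2; case: c' {hc'} => d1 d2.
  rewrite /posv /dot /rot /cross /= => h1 h2; (timeout 20 nia).
- move: h1 h2; case: c {hc} => c1 c2; case: c' {hc'} => d1 d2.
  rewrite /posv /dot /rot /cross /= => h1 h2; (timeout 20 nia).
Qed.

Lemma prim_rot p c : prim p (rot c) = prim p c.
Proof. case: c => a b; rewrite /prim /rot /= gcdNz gcdzC normrN.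
by case: (gcdz a b == 1%N); case: (`|a| <= p%:Z); case: (`|b| <= p%:Z).
Qed.


Lemma uniq_zrange p : uniq (zrange p).
Proof.
rewrite map_inj_uniq ?iota_uniq // => a b /addIr /eqP; rewrite eqz_nat => /eqP //.
Qed.

Lemma uniq_gens p : uniq (gens p).
Proof.
apply: filter_uniq; apply: allpairs_uniq; rewrite ?uniq_zrange //.
by move=> [a b] [c d] _ _.
Qed.

Lemma cross_neg_l a b : cross (negv a) b = - cross a b.
Proof. rewrite /cross /negv /=; ring. Qed.
Lemma cross_neg_r a b : cross a (negv b) = - cross a b.
Proof. rewrite /cross /negv /=; ring. Qed.
Lemma cross_anti a b : cross b a = - cross a b.
Proof. rewrite /cross; ring. Qed.

End IntPart.

Section Geo.
Local Open Scope ring_scope.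
Variable R : realFieldType.
Variable p : nat.
Local Notation n := (size (gens p)).

Definition gv (i : nat) := nth (0,0) (gens p) i.
Definition pt (t : nat -> R) : R * R :=
  (\sum_(i < n) t i * (gv i).1%:~R, \sum_(i < n) t i * (gv i).2%:~R).
Definition bnd (t : nat -> R) := forall i, (i < n)%N -> 0 <= t i <= 1.

Lemma inHE x : inH p x <-> exists t, bnd t /\ x = pt t.
Proof.
split.
  case=> t [hb [h1 h2]]; exists t; split => //; case: x h1 h2 => a b /= -> -> //.
case=> t [hb ->]; exists t; split => //.
Qed.

Definition phi (f : int * int) (x : R * R) : R := f.1%:~R * x.1 + f.2%:~R * x.2.

Lemma phi_pt f t : phi f (pt t) = \sum_(i < n) t i * (dot f (gv i))%:~R.
Proof.
rewrite /phi /pt /= !mulr_sumr -big_split /=; apply: eq_bigr => i _.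
rewrite /dot rmorphD /= !rmorphM /=; ring.
Qed.

Definition ind (f : int * int) : nat -> R := fun i => if 0 < dot f (gv i) then 1 else 0.
Definition Wf f := pt (ind f).

Lemma bnd_ind f : bnd (ind f).
Proof. by move=> i _; rewrite /ind; case: ifP => _; rewrite ?lexx ?ler01. Qed.

Lemma lemA f t : (forall i, (i < n)%N -> dot f (gv i) != 0) -> bnd t ->
  phi f (pt t) <= phi f (Wf f) /\
  (phi f (pt t) = phi f (Wf f) -> forall i, (i < n)%N -> t i = ind f i).
Proof.
move=> hnz hb.
have hterm : forall i : 'I_n, 0 <= ind f i * (dot f (gv i))%:~R - t i * (dot f (gv i))%:~R.
  move=> i; have /andP[h0 h1] := hb i (ltn_ord i); rewrite /ind.
  case: ifP => hd.
    have : (0 : R) < (dot f (gv i))%:~R by rewrite ltr0z.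
    move=> hd'; nra.
  have : ((dot f (gv i))%:~R : R) <= 0 by rewrite lerz0 leNgt hd.
  move=> hd'; nra.
have hsum : phi f (Wf f) - phi f (pt t) =
   \sum_(i < n) (ind f i * (dot f (gv i))%:~R - t i * (dot f (gv i))%:~R).
  by rewrite /Wf !phi_pt sumrB.
split.
  by rewrite -subr_ge0 hsum sumr_ge0.
move=> heq i hi.
have /eqP : \sum_(i < n) (ind f i * (dot f (gv i))%:~R - t i * (dot f (gv i))%:~R) == 0.
  by rewrite -hsum heq subrr.
move/(psumr_eq0P (fun i _ => hterm i)) => h.
have := h (Ordinal hi) isT; rewrite /= -mulrBl => /eqP; rewrite mulf_eq0 intr_eq0.
rewrite (negbTE (hnz i hi)) orbF subr_eq0 => /eqP ->.
by [].
Qed.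

Lemma Wf_vertex f : (forall i, (i < n)%N -> dot f (gv i) != 0) -> is_vertex p (Wf f).
Proof.
move=> hnz; split; first by apply/inHE; exists (ind f); split => //; exact: bnd_ind.
move=> y z lam /inHE[ty [hty ->]] /inHE[tz [htz ->]] /andP[l0 l1] e1 e2.
have [A1 A2] := lemA hnz hty; have [B1 B2] := lemA hnz htz.
have hphi : phi f (Wf f) = lam * phi f (pt ty) + (1 - lam) * phi f (pt tz).
  rewrite /phi e1 e2; ring.
have ey : phi f (pt ty) = phi f (Wf f) by nra.
have ez : phi f (pt tz) = phi f (Wf f) by nra.
have := A2 ey; have := B2 ez => hz hy.
by rewrite /pt; congr pair; apply: eq_bigr => i _; rewrite hy // hz.
Qed.


Lemma gv_gens i : (i < n)%N -> gv i \in gens p.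
Proof. by move=> hi; rewrite /gv mem_nth. Qed.

Lemma gv_prim i : (i < n)%N -> prim p (gv i).
Proof. by move/gv_gens; rewrite mem_gens => /andP[]. Qed.

Definition V c := Wf (fc p c).

Lemma V_vertex c : c \in Dp p -> is_vertex p (V c).
Proof.
rewrite mem_Dp => hc; apply: Wf_vertex => i hi; exact: fc_nz hc (gv_prim hi).
Qed.

Lemma sum_delta (F : nat -> R) i : (i < n)%N ->
  \sum_(j < n) ((j : nat) == i)%:R * F j = F i.
Proof.
move=> hi; rewrite (bigD1 (Ordinal hi)) //= eqxx mul1r big1 ?addr0 // => j hj.
have -> : ((j : nat) == i) = false.
  by apply/negbTE; apply: contra hj => /eqP hj'; apply/eqP; apply: val_inj.
by rewrite mul0r.
Qed.

Lemma Dp_index w : w \in Dp p -> exists2 i, (i < n)%N & (w = gv i \/ w = negv (gv i)).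
Proof.
rewrite mem_cat => /orP[hw|/mapP[v hv ->]].
  by exists (index w (gens p)); [rewrite index_mem | left; rewrite /gv nth_index].
by exists (index v (gens p)); [rewrite index_mem | right; rewrite /gv nth_index].
Qed.

Lemma V_inj : {in Dp p &, injective V}.
Proof.
move=> c c' hc hc' heq; apply/eqP; apply/negPn/negP => hne.
have pc : prim p c by rewrite -mem_Dp.
have pc' : prim p c' by rewrite -mem_Dp.
have hpat : forall i, (i < n)%N -> posv c (gv i) = posv c' (gv i).
  have hnz : forall i, (i < n)%N -> dot (fc p c) (gv i) != 0.
    by move=> i hi; exact: fc_nz pc (gv_prim hi).
  have [_ h2] := lemA hnz (bnd_ind (fc p c')).
  have := h2 (congr1 (phi (fc p c)) (esym heq)).
  move=> h i hi; have := h i hi; rewrite /ind (posE pc (gv_prim hi)) (posE pc' (gv_prim hi)).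
  by do 2 case: ifP => _ //; move/eqP; rewrite ?oner_eq0 // eq_sym oner_eq0.
have hpatD : forall w, w \in Dp p -> posv c w = posv c' w.
  move=> w hw; have pw : prim p w by rewrite -mem_Dp.
  have [i hi [->|->]] := Dp_index hw; first exact: hpat.
  by rewrite (posv_neg pc (gv_prim hi)) (posv_neg pc' (gv_prim hi)) hpat.
have := pattern_diff_int pc pc' hne.
have hr : rot c \in Dp p by rewrite mem_Dp prim_rot.
have hr' : rot c' \in Dp p by rewrite mem_Dp prim_rot.
by rewrite -(hpatD _ hr) (hpatD _ hr') (posv_rot pc) (posv_rot pc').
Qed.


Lemma pt_delta (t : nat -> R) a i : (i < n)%N ->
  pt (fun j => t j + a * (j == i)%:R) =
  ((pt t).1 + a * (gv i).1%:~R, (pt t).2 + a * (gv i).2%:~R).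
Proof.
move=> hi; rewrite /pt /=; congr pair.
  rewrite -(sum_delta (fun j => a * (gv j).1%:~R) hi) -big_split /=.
  by apply: eq_bigr => j _; ring.
rewrite -(sum_delta (fun j => a * (gv j).2%:~R) hi) -big_split /=.
by apply: eq_bigr => j _; ring.
Qed.

Lemma C1 x t : is_vertex p x -> bnd t -> x = pt t ->
  forall i, (i < n)%N -> t i = 0 \/ t i = 1.
Proof.
move=> [_ hv] hb hx i hi.
have /andP[h0 h1] := hb i hi.
case: (ltgtP (t i) 0) => [h|h|->]; [by exfalso; clear -h h0; lra| |by left].
case: (ltgtP (t i) 1) => [h'|h'|->]; [|by exfalso; clear -h' h1; lra|by right].
exfalso.
set e := t i * (1 - t i).
have he : 0 < e by rewrite /e; clear -h h'; nra.
have he1 : e <= t i by rewrite /e; clear -h h'; nra.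
have he2 : e <= 1 - t i by rewrite /e; clear -h h'; nra.
have bp : bnd (fun j => t j + e * (j == i)%:R).
  move=> j hj; case: (eqVneq j i) => [->|hji]; rewrite ?eqxx ?mulr1 /=.
    by apply/andP; split; clear -he he1 he2 h h'; lra.
  by rewrite mulr0 addr0; exact: hb.
have bm : bnd (fun j => t j + (- e) * (j == i)%:R).
  move=> j hj; case: (eqVneq j i) => [->|hji]; rewrite ?eqxx ?mulr1 /=.
    by apply/andP; split; clear -he he1 he2 h h'; lra.
  by rewrite mulr0 addr0; exact: hb.
have := hv _ _ (2^-1) (proj2 (inHE _) (ex_intro _ _ (conj bp erefl)))
   (proj2 (inHE _) (ex_intro _ _ (conj bm erefl))).
rewrite !pt_delta // hx /=.
have h2 : 0 < (2^-1 : R) < 1.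
  have q1 : (0 : R) < 2^-1 by rewrite invr_gt0 ltr0n.
  have q2 : (2^-1 : R) < 1 by rewrite invf_lt1 ?ltr0n ?ltr1n.
  by rewrite q1 q2.
move=> /(_ h2).
have E : forall u v : R, u = 2^-1 * (u + e * v) + (1 - 2^-1) * (u + - e * v).
  by move=> u v; field.
move=> /(_ (E _ _) (E _ _)) [ea eb].
have hg := prim_neq0 (gv_prim hi); move: hg.
have z1 : ((gv i).1%:~R : R) = 0.
  by move: ea => /eqP; rewrite -subr_eq0 => /eqP H; clear -H he; nra.
have z2 : ((gv i).2%:~R : R) = 0.
  by move: eb => /eqP; rewrite -subr_eq0 => /eqP H; clear -H he; nra.
move/eqP: z1; rewrite intr_eq0 => /eqP z1; move/eqP: z2; rewrite intr_eq0 => /eqP z2.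
by move: z1 z2; case: (gv i) => a b /= -> ->; rewrite eqxx.
Qed.


Definition sv (t : nat -> R) i : int * int := if t i == 1 then gv i else negv (gv i).
Definition sg (t : nat -> R) i : R := if t i == 1 then 1 else -1.

Lemma sv1 t i : ((sv t i).1%:~R : R) = sg t i * (gv i).1%:~R.
Proof. by rewrite /sv /sg; case: ifP => _ /=; rewrite ?mul1r // rmorphN mulN1r. Qed.
Lemma sv2 t i : ((sv t i).2%:~R : R) = sg t i * (gv i).2%:~R.
Proof. by rewrite /sv /sg; case: ifP => _ /=; rewrite ?mul1r // rmorphN mulN1r. Qed.

Lemma frac3 (a b c : int) : 0 < a -> 0 < b -> 0 < c ->
  0 < (a%:~R : R) / (a + b + c)%:~R < 1.
Proof.
move=> ha hb hc; have hM : (0 : R) < (a + b + c)%:~R by rewrite ltr0z; lia.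
have ha' : (0 : R) < a%:~R by rewrite ltr0z.
apply/andP; split; first exact: divr_gt0.
rewrite ltr_pdivrMr // mul1r ltr_int; lia.
Qed.

Lemma step (x q : R) : (x = 0 \/ x = 1) -> 0 < q < 1 ->
  0 < x + - ((if x == 1 then 1 else -1) * q) < 1.
Proof.
move=> [->|->] /andP[q0 q1].
  rewrite (_ : (0 : R) == 1 = false); last by apply/negbTE; rewrite eq_sym oner_eq0.
  apply/andP; split; lra.
rewrite eqxx; apply/andP; split; lra.
Qed.

Lemma crossxx a : cross a a = 0.
Proof. by rewrite /cross mulrC subrr. Qed.

Lemma C2 t i j k : is_vertex p (pt t) -> bnd t ->
  (forall l, (l < n)%N -> t l = 0 \/ t l = 1) ->
  (i < n)%N -> (j < n)%N -> (k < n)%N ->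
  0 < cross (sv t i) (sv t j) -> 0 < cross (sv t j) (sv t k) ->
  0 < cross (sv t k) (sv t i) -> False.
Proof.
move=> hv hb h01 hi hj hk cij cjk cki.
set mi := cross (sv t j) (sv t k); set mj := cross (sv t k) (sv t i).
set mk := cross (sv t i) (sv t j).
have nij : i != j by apply/eqP => e; move: cij; rewrite e crossxx ltxx.
have njk : j != k by apply/eqP => e; move: cjk; rewrite e crossxx ltxx.
have nki : k != i by apply/eqP => e; move: cki; rewrite e crossxx ltxx.
have id1 : mi * (sv t i).1 + mj * (sv t j).1 + mk * (sv t k).1 = 0.
  by rewrite /mi /mj /mk /cross; ring.
have id2 : mi * (sv t i).2 + mj * (sv t j).2 + mk * (sv t k).2 = 0.
  by rewrite /mi /mj /mk /cross; ring.
set M : R := (mi + mj + mk)%:~R.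
have qi : 0 < (mi%:~R : R) / M < 1 by apply: frac3.
have qj : 0 < (mj%:~R : R) / M < 1.
  by rewrite /M (_ : mi + mj + mk = mj + mk + mi) ?frac3 //; ring.
have qk : 0 < (mk%:~R : R) / M < 1.
  by rewrite /M (_ : mi + mj + mk = mk + mi + mj) ?frac3 //; ring.
set ai := - (sg t i * ((mi%:~R : R) / M)).
set aj := - (sg t j * ((mj%:~R : R) / M)).
set ak := - (sg t k * ((mk%:~R : R) / M)).
set t1 := fun l => t l + ai * (l == i)%:R.
set t2 := fun l => t1 l + aj * (l == j)%:R.
set t3 := fun l => t2 l + ak * (l == k)%:R.
have Hpt : pt t3 = pt t.
  rewrite /t3 pt_delta // /t2 pt_delta // /t1 pt_delta //=.
  have E : forall (x : R) (g1 g2 g3 : int), x + ai * g1%:~R + aj * g2%:~R + ak * g3%:~R =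
     x - M^-1 * (sg t i * g1%:~R * mi%:~R + sg t j * g2%:~R * mj%:~R + sg t k * g3%:~R * mk%:~R).
    by move=> x g1 g2 g3; rewrite /ai /aj /ak; ring.
  rewrite !E -!sv1 -!sv2.
  have Z1 : ((sv t i).1%:~R * mi%:~R + (sv t j).1%:~R * mj%:~R + (sv t k).1%:~R * mk%:~R : R) = 0.
    by rewrite -!rmorphM -!rmorphD /= -[X in X%:~R = _]/(_ : int) (_ : _ + _ = 0) //;
       rewrite -id1; ring.
  have Z2 : ((sv t i).2%:~R * mi%:~R + (sv t j).2%:~R * mj%:~R + (sv t k).2%:~R * mk%:~R : R) = 0.
    by rewrite -!rmorphM -!rmorphD /= (_ : _ + _ = 0) //; rewrite -id2; ring.
  by rewrite Z1 Z2 mulr0 !subr0.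
have h3i : t3 i = t i + ai.
  by rewrite /t3 /t2 /t1 eqxx (negbTE nij) eq_sym (negbTE nki) !mulr0 !addr0 mulr1.
have hstep : forall l (q : R), (l < n)%N -> 0 < q < 1 ->
    0 < t l + - (sg t l * q) < 1.
  by move=> l q hl hq; rewrite /sg; apply: step => //; exact: h01.
have bt3 : bnd t3.
  move=> l hl; rewrite /t3 /t2 /t1.
  case: (eqVneq l i) => [->|li].
    rewrite (negbTE nij) eq_sym (negbTE nki) /= ?mulr0 ?addr0 ?mulr1.
    by have /andP[u v] := hstep i _ hi qi; rewrite ltW ?(ltW v).
  case: (eqVneq l j) => [->|lj].
    rewrite (negbTE njk) /= ?mulr0 ?addr0 ?mulr1.
    by have /andP[u v] := hstep j _ hj qj; rewrite ltW ?(ltW v).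
  case: (eqVneq l k) => [->|lk].
    rewrite /= ?mulr0 ?addr0 ?mulr1.
    by have /andP[u v] := hstep k _ hk qk; rewrite ltW ?(ltW v).
  by rewrite /= ?mulr0 ?addr0; exact: hb.
have := C1 hv bt3 (esym Hpt) hi; rewrite h3i.
have /andP[u v] := hstep i _ hi qi.
by case=> e; move: u v; rewrite e ltxx // andbF.
Qed.


Lemma gens_nonempty : (0 < p)%N -> (0 < n)%N.
Proof.
move=> hp; have : ((1, 0) : int * int) \in gens p.
  rewrite mem_gens /prim /lexpos /=; lia.
by case: (gens p) => //.
Qed.

Lemma cross_gv_nz i j : (i < n)%N -> (j < n)%N -> i != j -> cross (gv i) (gv j) != 0.
Proof.
move=> hi hj hij; apply/eqP => h.
have := gens_cross_eq (gv_gens hi) (gv_gens hj) h.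
by move/eqP; rewrite /gv nth_uniq ?uniq_gens // (negbTE hij).
Qed.

Lemma cross_sv_nz t i j : (i < n)%N -> (j < n)%N -> i != j -> cross (sv t i) (sv t j) != 0.
Proof.
move=> hi hj hij; have := cross_gv_nz hi hj hij.
by rewrite /sv; case: ifP => _; case: ifP => _; rewrite ?cross_neg_l ?cross_neg_r ?opprK ?oppr_eq0.
Qed.

Lemma C3 x t : (0 < p)%N -> is_vertex p x -> bnd t -> x = pt t ->
  exists2 c, c \in Dp p & x = V c.
Proof.
move=> hp hv hb hx.
have h01 := C1 hv hb hx.
have hv' : is_vertex p (pt t) by rewrite -hx.
pose rel i j := 0 < cross (sv t i) (sv t j).
have tot : forall i j, (i < n)%N -> (j < n)%N -> i != j -> rel i j \/ rel j i.
  move=> i j hi hj hij; have := cross_sv_nz t hi hj hij.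
  rewrite /rel (cross_anti (sv t i)); set c := cross _ _ => hc.
  case: (ltgtP 0 c) => h; [by left| right; lia | by move: hc; rewrite h eqxx].
have trans : forall i j k, (i < n)%N -> (j < n)%N -> (k < n)%N ->
    rel i j -> rel j k -> rel i k.
  move=> i j k hi hj hk rij rjk.
  case: (eqVneq i k) => [e|ik].
    by exfalso; move: rjk rij; rewrite /rel e cross_anti; set c := cross _ _ => ?; lia.
  case: (tot i k hi hk ik) => // rki.
  by exfalso; exact: (C2 hv' hb h01 hi hj hk rij rjk rki).
have hmax : forall m, (0 < m)%N -> (m <= n)%N ->
    exists2 k, (k < m)%N & forall i, (i < m)%N -> i != k -> rel i k.
  elim=> [//|m IH] _ hm.
  case: m IH hm => [|m] IH hm.
    by exists 0%N => // i; rewrite ltnS leqn0 => /eqP ->; rewrite eqxx.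
  have [k hk hkmax] := IH isT (ltnW hm).
  have hkn : (k < n)%N by apply: leq_trans hk (ltnW hm).
  have hk' : k != m.+1 by rewrite neq_ltn (leq_trans hk) ?ltnS ?leqnn.
  case: (tot k m.+1 hkn hm hk') => [rk|rk].
    exists m.+1 => // i; rewrite ltnS leq_eqVlt => /orP[/eqP ->|hi]; first by rewrite eqxx.
    move=> _; case: (eqVneq i k) => [->//|ik].
    by apply: (trans i k m.+1) => //; [apply: leq_trans hi (ltnW hm)|exact: hkmax].
  exists k; first by apply: leq_trans hk _.
  move=> i; rewrite ltnS leq_eqVlt => /orP[/eqP -> _|hi ik]; first exact: rk.
  exact: hkmax.
have [k hk hkmax] := hmax n (gens_nonempty hp) (leqnn n).
set K := sv t k.
pose c : int * int := (K.2, - K.1).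
have pK : prim p K by rewrite /K /sv; case: ifP => _; rewrite ?prim_negv gv_prim.
have pc : prim p c.
  have -> : c = negv (rot K) by rewrite /c /negv /rot /= opprK.
  by rewrite prim_negv prim_rot.
exists c; first by rewrite mem_Dp.
have key : forall i, (i < n)%N -> t i = ind (fc p c) i.
  move=> i hi; rewrite /ind -(posE pc (gv_prim hi)).
  have -> : posv c (gv i) = (0 < cross (gv i) K) || ((cross (gv i) K == 0) && (0 < dot K (gv i))).
    by rewrite /posv /dot /cross /rot /c /=; congr (_ || (_ && _));
        [congr (_ < _)|congr (_ == _)|congr (_ < _)]; ring.
  have n01 : ((0:R) == 1) = false by apply/negbTE; rewrite eq_sym oner_eq0.
  have hdd : 0 < dot (gv i) (gv i).
    by move: (prim_neq0 (gv_prim hi)); case: (gv i) => a b;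
          rewrite /dot /= xpair_eqE negb_and => ?; nia.
  case: (eqVneq i k) => [eik|nik].
    rewrite /K /sv -eik; case: (h01 i hi) => ->.
      rewrite n01 cross_neg_r crossxx oppr0 ltxx eqxx /=.
      have -> : (0 < dot (negv (gv i)) (gv i)) = false.
        apply/negbTE; rewrite -leNgt (_ : dot (negv (gv i)) (gv i) = - dot (gv i) (gv i)).
          by rewrite oppr_le0 ltW.
        by rewrite /dot /negv /=; ring.
      by [].
    by rewrite eqxx crossxx ltxx eqxx hdd.
  have rk := hkmax i hi nik; move: rk; rewrite /rel -/K /sv.
  case: (h01 i hi) => ->; rewrite ?eqxx ?n01 ?cross_neg_l => rk.
    have -> : (0 < cross (gv i) K) = false by apply/negbTE; rewrite -leNgt; lia.
    by have -> : (cross (gv i) K == 0) = false by apply/negbTE; lia.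
  by rewrite rk.
rewrite hx /V /Wf /pt; congr pair; apply: eq_bigr => i _; rewrite key //.
Qed.

End Geo.

Lemma T_totient n : (0 < n)%N -> \sum_(1 <= j < n.+1) coprime n j = totient n.
Proof.
move=> hn; rewrite totient_count_coprime big_nat_recr //= [RHS]big_ltn // addnC.
by congr (_ + _); rewrite /coprime gcdn0 gcdnn.
Qed.

Lemma S_rec p : (0 < p)%N ->
  (\sum_(1 <= i < p.+1) \sum_(1 <= j < p.+1) coprime i j).+1 =
  2 * \sum_(1 <= j < p.+1) totient j.
Proof.
elim: p => [//|p IH] _.
case: p IH => [|p] IH.
  by rewrite !big_nat1.
rewrite big_nat_recr //= [\sum_(1 <= j < p.+3) totient j]big_nat_recr //=.
rewrite (eq_big_nat _ _ (F2 := fun i => \sum_(1 <= j < p.+2) coprime i j + coprime i p.+2)); last first.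
  by move=> i _; rewrite big_nat_recr.
rewrite big_split /= T_totient //.
have -> : \sum_(1 <= i < p.+2) coprime i p.+2 = totient p.+2.
  rewrite -T_totient // [RHS]big_nat_recr //= /coprime gcdnn /= addn0.
  by apply: eq_bigr => i _; rewrite gcdnC.
rewrite mulnDr -IH //; lia.
Qed.

Lemma count_allpairs_pair (P : pred (int * int)) (s t : seq int) :
  count P [seq (x, y) | x <- s, y <- t] = \sum_(x <- s) count (fun y => P (x, y)) t.
Proof.
elim: s => [|x s IH]; first by rewrite big_nil.
by rewrite allpairs_cons count_cat IH big_cons count_map.
Qed.

Definition zlist (p : nat) : seq int :=
  Posz 0 :: ([seq (Posz i) | i <- iota 1 p] ++ [seq (- (Posz i))%R | i <- iota 1 p]).

Lemma perm_zrange p : perm_eq (zrange p) (zlist p).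
Proof.
apply: uniq_perm; first exact: uniq_zrange.
  rewrite /zlist /= cat_uniq !map_inj_uniq ?iota_uniq //; try by move=> ? ? ?; lia.
  rewrite andbT mem_cat negb_or; apply/andP; split; [apply/andP; split|].
  - by apply/mapP => [[i]]; rewrite mem_iota => hi /eqP; lia.
  - by apply/mapP => [[i]]; rewrite mem_iota => hi /eqP; lia.
  - apply/hasPn => x /mapP [i]; rewrite mem_iota => hi -> ; apply/mapP => [[j]].
    rewrite mem_iota => hj /eqP; lia.
move=> x; rewrite mem_zrange /zlist inE mem_cat.
apply/idP/idP.
  move=> h; case: (ltgtP x 0) => hx.
  - apply/orP; right; apply/orP; right; apply/mapP; exists (absz x); last by lia.
    by rewrite mem_iota; lia.
  - apply/orP; right; apply/orP; left; apply/mapP; exists (absz x); last by lia.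
    by rewrite mem_iota; lia.
  - by apply/orP; left; apply/eqP.
case/orP => [/eqP ->|/orP[/mapP[i]|/mapP[i]]]; rewrite ?mem_iota; lia.
Qed.

Lemma count_sum (a : pred nat) s : count a s = \sum_(i <- s) a i.
Proof. by rewrite -sum1_count big_mkcond; apply: eq_bigr => i _; case: (a i). Qed.

Lemma count_iota1 p : (0 < p)%N -> count (fun i => i == 1)%N (iota 1 p) = 1%N.
Proof.
move=> hp; rewrite (eq_count (a2 := pred1 1%N)) // count_uniq_mem ?iota_uniq //.
by rewrite mem_iota; case: p hp.
Qed.

Lemma size_gens p : (0 < p)%N -> size (gens p) = (4 * \sum_(1 <= j < p.+1) totient j)%N.
Proof.
move=> hp.
rewrite size_filter count_allpairs_pair (perm_big _ (perm_zrange p)).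
under eq_bigr => a _ do rewrite (permP (perm_zrange p)).
rewrite /zlist big_cons big_cat /= !big_map.
have A0 : count (fun y : int => (gcdz 0%Z y == 1%R) && lexpos (0%Z, y))
    ([seq Posz i | i <- iota 1 p] ++ [seq (- Posz i)%R | i <- iota 1 p]) = 1%N.
  rewrite count_cat !count_map.
  rewrite [X in (X + _)%N](@eq_in_count _ _ (fun i => i == 1)%N); last first.
    move=> i; rewrite mem_iota => hi /=; rewrite gcd0z /lexpos /=; lia.
  rewrite count_iota1 // [X in (_ + X)%N](@eq_in_count _ _ pred0) ?count_pred0 //.
  move=> i; rewrite mem_iota => hi /=; rewrite /lexpos /=; lia.
have A2 : \sum_(j <- iota 1 p)
      ((gcdz (- Posz j) 0%Z == 1%R) && lexpos ((- Posz j)%R, 0%Z) +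
       count (fun y : int => (gcdz (- Posz j) y == 1%R) && lexpos ((- Posz j)%R, y))
         ([seq Posz i | i <- iota 1 p] ++ [seq (- Posz i)%R | i <- iota 1 p]))%N = 0%N.
  rewrite big1_seq // => j /andP[_]; rewrite mem_iota => hj.
  rewrite (@eq_in_count _ _ pred0) ?count_pred0; first by rewrite /lexpos /=; lia.
  by move=> y _ /=; rewrite /lexpos /=; lia.
have A1 : \sum_(j <- iota 1 p)
      ((gcdz (Posz j) 0%Z == 1%R) && lexpos (Posz j, 0%Z) +
       count (fun y : int => (gcdz (Posz j) y == 1%R) && lexpos (Posz j, y))
         ([seq Posz i | i <- iota 1 p] ++ [seq (- Posz i)%R | i <- iota 1 p]))%N =
    (1 + 2 * \sum_(1 <= j < p.+1) \sum_(1 <= i < p.+1) coprime j i)%N.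
  rewrite (eq_big_seq (fun j => (j == 1) + 2 * \sum_(1 <= i < p.+1) coprime j i)%N).
    rewrite big_split /= -count_sum count_iota1 // -big_distrr /=.
    by rewrite /index_iota subSS subn0.
  move=> j; rewrite mem_iota => hj.
  rewrite count_cat !count_map; congr (_ + _)%N.
    rewrite gcdz0 /lexpos /=; lia.
  rewrite mul2n -addnn; have E : (\sum_(1 <= i < p.+1) coprime j i)%N =
        count (fun i => coprime j i) (iota 1 p).
    by rewrite count_sum /index_iota subSS subn0.
  rewrite E; congr (_ + _)%N; apply: eq_in_count => i; rewrite mem_iota => hi /=.
    have hj' : (0 < Posz j)%R by lia.
    by rewrite /lexpos /= hj' orTb andbT.
  have hj' : (0 < Posz j)%R by lia.
  by rewrite /lexpos /= hj' orTb andbT gcdzN.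
rewrite A0 A2 A1 addn0 add0n.
have := S_rec hp; lia.
Qed.

Lemma uniq_Dp p : uniq (Dp p).
Proof.
rewrite /Dp cat_uniq uniq_gens map_inj_uniq ?uniq_gens //=; last first.
  by move=> [a b] [c d] [/eqP]; rewrite eqr_opp => /eqP -> /eqP; rewrite eqr_opp => /eqP ->.
rewrite andbT; apply/hasPn => v /mapP[w hw ->].
apply/negP; rewrite mem_gens => /andP[_ h]; move: hw; rewrite mem_gens => /andP[_ h'].
move: h h'; case: w => a b; rewrite /lexpos /negv /=; lia.
Qed.


Theorem proposition4p3 (R : realFieldType) (p : nat) (hp : (0 < p)%N) :
  exists s : seq (R * R),
    [/\ uniq s,
        (forall x : R * R, x \in s <-> is_vertex p x) &
        size s = (8 * \sum_(1 <= j < p.+1) totient j)%N].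
Proof.
exists (map (@V R p) (Dp p)); split.
- by rewrite (map_inj_in_uniq (@V_inj R p)) uniq_Dp.
- move=> x; split.
    by move/mapP => [c hc ->]; exact: V_vertex.
  move=> hv; move: (proj1 hv) => /inHE [t [hb hx]].
  have [c hc ->] := C3 hp hv hb hx.
  exact: map_f.
- by rewrite size_map size_cat size_map size_gens //; lia.
Qed.
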